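(* For every $u\in V$, $\Pr(E_u)=\mathcal{O}\left(\log^{-1} n\right)$ as $n\to\infty$, with the implied constant independent of $u$; here $E_u$ is the event that there exists a C3 rooted at $u$ whose type is one of the seven words in $\{s,w\}^3\setminus\{(s,s,s)\}$ (i.e., containing at least one $w$).
   Context: For an integer $n\ge1$, the $n$-octahedral graph $G'_n=(V,E')$ is the undirected graph with vertex set $V=\{u\in\mathbb{Z}^3:|u_1|+|u_2|+|u_3|=n\}$ and edge set $E'=\{\{v,w\}\subset V: v\neq w,\ |v_i-w_i|\le 1 \text{ for all } i=1,2,3\}$. For $u,v\in V$, $d_{uv}$ denotes the shortest-path distance in $G'_n$, and $Z_u=\left(\sum_{w\in V\setminus\{u\}} d_{uw}^{-2}\right)^{-1}$. The OSW random graph $G_n=(V,E)$ is the directed graph in which, for every $\{u,v\}\in E'$, both $(u,v),(v,u)\in E$, and in addition each vertex $u\in V$, independently of the others, chooses one vertex $v\in V\setminus\{u\}$ with probability $Z_u d_{uv}^{-2}$ and the long-range edge $(u,v)$ is added; $C_{uv}$ denotes the event that $u$ chooses $v$. For an ordered pair $(x,y)$ of distinct vertices, say $(x,y)$ is of type $s$ if $\{x,y\}\in E'$, and of type $w$ if $d_{xy}\ge2$ and $C_{xy}$ occurs. A C3 rooted at $u$ of type $(t_1,t_2,t_3)\in\{s,w\}^3$ is a triple $(u,a,b)$ of pairwise distinct vertices such that $(u,a)$ is of type $t_1$, $(a,b)$ is of type $t_2$ and $(b,u)$ is of type $t_3$. *)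

(* Defs.v *)
From Stdlib Require Import Reals.
From HB Require Import structures.
From mathcomp Require Import all_boot.
Set Implicit Arguments. Unset Strict Implicit. Unset Printing Implicit Defensive.

Definition absdiff (a b : nat) : nat := (a - b) + (b - a).

(* Encoding: an integer coordinate u_i with |u_i| <= n is stored as u_i + n
   in 'I_(2n+1).  Differences of coordinates are preserved by the shift. *)
Notation coord n := 'I_(n.*2.+1).
Notation pt n := (coord n * coord n * coord n)%type.

Definition on_octa (n : nat) (x : pt n) : bool :=
  let '(a, b, c) := x in
  absdiff a n + absdiff b n + absdiff c n == n.

Notation vert n := {x : pt n | @on_octa n x}.

Definition sedge (n : nat) (v w : vert n) : bool :=
  let '(a1, a2, a3) := val v in
  let '(b1, b2, b3) := val w in
  [&& v != w, absdiff a1 b1 <= 1, absdiff a2 b2 <= 1 & absdiff a3 b3 <= 1].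

Definition reach (n : nat) (u v : vert n) (k : nat) : bool :=
  [exists p : k.-tuple (vert n), path (@sedge n) u p && (last u p == v)].

(* shortest-path distance d_uv in G'_n (G'_n is connected, and any shortest
   path has length < |V|, so the search range suffices) *)
Definition dist (n : nat) (u v : vert n) : nat :=
  find (reach u v) (iota 0 #|{: vert n}|).

Definition Zu (n : nat) (u : vert n) : R :=
  Rinv (\big[Rplus/R0]_(w : vert n | w != u) Rinv ((INR (dist u w)) ^ 2)).

Definition pchoose (n : nat) (u v : vert n) : R :=
  Rmult (Zu u) (Rinv ((INR (dist u v)) ^ 2)).

Definition valid_choice (n : nat) (c : {ffun vert n -> vert n}) : bool :=
  [forall u, c u != u].

Definition weight (n : nat) (c : {ffun vert n -> vert n}) : R :=
  \big[Rmult/R1]_(x : vert n) pchoose x (c x).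

Definition type_s (n : nat) (x y : vert n) : bool := sedge x y.
Definition type_w (n : nat) (c : {ffun vert n -> vert n}) (x y : vert n) : bool :=
  (2 <= dist x y) && (c x == y).

Definition typed (n : nat) (c : {ffun vert n -> vert n}) (x y : vert n) : bool :=
  type_s x y || type_w c x y.

Definition E_ev (n : nat) (u : vert n) (c : {ffun vert n -> vert n}) : bool :=
  [exists a : vert n, exists b : vert n,
    [&& a != u, b != u, a != b,
        typed c u a, typed c a b, typed c b u &
        [|| type_w c u a, type_w c a b | type_w c b u]]].

Definition prob_E (n : nat) (u : vert n) : R :=
  \big[Rplus/R0]_(c : {ffun vert n -> vert n} | valid_choice c && E_ev u c)
     weight c.

(* Main.v *)
Require Import Defs.
From Stdlib Require Import Reals.
From mathcomp Require Import all_boot.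
From Stdlib Require Import Lra Lia.
From HB Require Import structures.
From mathcomp Require Import Rstruct zify.
Require Import Defs.
Set Implicit Arguments. Unset Strict Implicit. Unset Printing Implicit Defensive.

Local Close Scope R_scope.
Local Open Scope R_scope.

Section RBig.
Variable I : Type.

Lemma sumR_le (r : seq I) (P : pred I) (F G : I -> R) :
  (forall i, P i -> (F i <= G i)) ->
  (\big[Rplus/R0]_(i <- r | P i) F i <= \big[Rplus/R0]_(i <- r | P i) G i).
Proof.
move=> h; apply: (big_ind2 (fun x y => (x <= y))) => //; first lra.
by move=> *; lra.
Qed.

Lemma sumR_ge0 (r : seq I) (P : pred I) (F : I -> R) :
  (forall i, P i -> (0 <= F i)) -> (0 <= \big[Rplus/R0]_(i <- r | P i) F i).
Proof.
move=> h; apply: (big_ind (fun x => (0 <= x))) => //; first lra.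
by move=> *; lra.
Qed.

Lemma prodR_le (r : seq I) (P : pred I) (F G : I -> R) :
  (forall i, P i -> (0 <= F i) /\ (F i <= G i)) ->
  (0 <= \big[Rmult/R1]_(i <- r | P i) F i) /\
  (\big[Rmult/R1]_(i <- r | P i) F i <= \big[Rmult/R1]_(i <- r | P i) G i).
Proof.
move=> h; apply: (big_ind2 (fun x y => (0 <= x) /\ (x <= y))) => //; first lra.
move=> a1 a2 b1 b2 [h1 h2] [h3 h4]; split; first by apply: Rmult_le_pos.
by apply: Rmult_le_compat.
Qed.

Lemma prodR_ge0 (r : seq I) (P : pred I) (F : I -> R) :
  (forall i, P i -> (0 <= F i)) -> (0 <= \big[Rmult/R1]_(i <- r | P i) F i).
Proof.
move=> h; apply: (big_ind (fun x => (0 <= x))) => //; first lra.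
by move=> *; apply: Rmult_le_pos.
Qed.

Lemma sumR_mull (r : seq I) (P : pred I) (F : I -> R) c :
  \big[Rplus/R0]_(i <- r | P i) (c * F i) = (c * \big[Rplus/R0]_(i <- r | P i) F i).
Proof. by rewrite big_distrr. Qed.

End RBig.

Lemma sumR_single (I : finType) (P : pred I) (F : I -> R) j :
  (forall i, P i -> (0 <= F i)) -> P j ->
  (F j <= \big[Rplus/R0]_(i | P i) F i).
Proof.
move=> h Pj; rewrite (bigD1 j) //=.
have := @sumR_ge0 _ (index_enum I) (fun i => P i && (i != j)) F.
move=> /(_ (fun i Pi => h i (proj1 (andP Pi)))); lra.
Qed.

Lemma inv_ge0 (r : R) : (0 <= r) -> (0 <= / r).
Proof.
move=> h; case: (Req_dec r 0) => [->|hr]; first by rewrite Rinv_0; lra.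
by apply/Rlt_le/Rinv_0_lt_compat; lra.
Qed.

Lemma sumR_const (I : finType) (c : R) :
  \big[Rplus/R0]_(i : I) c = (INR #|I| * c).
Proof.
rewrite big_const cardE; elim: (size _) => [|k IH] /=; first lra.
rewrite IH; case: k {IH} => [|k] /=; lra.
Qed.

Lemma sumR_singleT (I : finType) (F : I -> R) j :
  (forall i, 0 <= F i) -> F j <= \big[Rplus/R0]_i F i.
Proof. by move=> h; apply: (@sumR_single I xpredT F j) => // i _; apply: h. Qed.

Local Close Scope R_scope.
Local Open Scope R_scope.

Lemma reach0 n (x y : vert n) : reach x y 0 -> y = x.
Proof. by move=> /existsP [p /andP [_ /eqP]]; rewrite (tuple0 p) /= => ->. Qed.

Lemma reach_refl n (x : vert n) : reach x x 0.
Proof. by apply/existsP; exists [tuple]; rewrite /= eqxx. Qed.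

Lemma reach_step n (x y z : vert n) k : reach x y k -> sedge y z -> reach x z k.+1.
Proof.
move=> /existsP [p /andP [hp /eqP hl]] hyz; apply/existsP; exists (rcons_tuple p z).
by rewrite /= rcons_path last_rcons hp hl hyz eqxx.
Qed.

Lemma card_vert_gt0 n (x : vert n) : (0 < #|{: vert n}|)%N.
Proof. by apply/card_gt0P; exists x. Qed.

Lemma dist_self n (x : vert n) : dist x x = 0%N.
Proof.
rewrite /dist; case: #|_| (card_vert_gt0 x) => // k _.
by rewrite /= reach_refl.
Qed.

Lemma dist_pos n (x y : vert n) : y != x -> (0 < dist x y)%N.
Proof.
move=> hyx; rewrite /dist; case: #|_| (card_vert_gt0 x) => // k _ /=.
by case: ifP => // /reach0 /eqP; rewrite (negbTE hyx).
Qed.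

Lemma find_le_nth (T : Type) (a : pred T) (s : seq T) x0 i :
  (i < size s)%N -> a (nth x0 s i) -> (find a s <= i)%N.
Proof.
elim: s i => [|y s IH] [|i] //= hi ha; first by rewrite ha.
by case: ifP => // _; rewrite ltnS; apply: IH.
Qed.

Lemma dist_le n (x y : vert n) k : reach x y k -> (dist x y <= k)%N.
Proof.
move=> hr; rewrite /dist; case: (ltnP k #|{: vert n}|) => hk.
  apply: (@find_le_nth _ _ _ 0%N); first by rewrite size_iota.
  by rewrite nth_iota.
by apply: leq_trans (find_size _ _) _; rewrite size_iota.
Qed.

Lemma absdiffC a b : absdiff a b = absdiff b a.
Proof. by rewrite /absdiff addnC. Qed.

Lemma sedge_sym n (x y : vert n) : sedge x y = sedge y x.
Proof.
rewrite /sedge; case: (val x) => [[a1 a2] a3]; case: (val y) => [[b1 b2] b3].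
by rewrite eq_sym (absdiffC a1) (absdiffC a2) (absdiffC a3).
Qed.

Definition code n (a b : coord n) : 'I_3 := inord (b + 1 - a).

Definition ncode n (x y : vert n) : 'I_3 * 'I_3 * 'I_3 :=
  let '(a1, a2, a3) := val x in let '(b1, b2, b3) := val y in
  (code a1 b1, code a2 b2, code a3 b3).

Lemma code_inj n (a b b' : coord n) :
  (absdiff a b <= 1)%N -> (absdiff a b' <= 1)%N -> code a b = code a b' -> b = b'.
Proof.
rewrite /code /absdiff => h1 h2 /(congr1 val) /=.
rewrite !inordK; [|lia|lia] => h; apply: val_inj => /=; lia.
Qed.

Lemma nbr_card n (x : vert n) : (#|[pred y | sedge x y]| <= 27)%N.
Proof.
have inj : {in [pred y | sedge x y] &, injective (ncode x)}.
  move=> y y'; rewrite !inE /sedge /ncode.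
  case Ey: (val y) => [[b1 b2] b3]; case Ey': (val y') => [[c1 c2] c3].
  case: (val x) => [[a1 a2] a3] /and4P [_ h1 h2 h3] /and4P [_ h1' h2' h3'] [e1 e2 e3].
  apply: val_inj; rewrite Ey Ey'.
  by rewrite (code_inj h1 h1' e1) (code_inj h2 h2' e2) (code_inj h3 h3' e3).
rewrite -(card_in_imset inj).
apply: leq_trans (max_card _) _.
by rewrite !card_prod !card_ord.
Qed.

Lemma sum_ind (I : finType) (P : pred I) :
  \big[Rplus/R0]_(i : I) (if P i then 1 else 0) = INR #|P|.
Proof.
rewrite -big_mkcond /= big_const_seq.
rewrite cardE /enum_mem size_filter /=.
have iE : forall k, iter k (Rplus 1) R0 = INR k.
  by elim=> [|k IH] //=; rewrite IH; case: k {IH} => /= *; lra.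
rewrite iE; congr INR; rewrite /index_enum; case: index_enum_key => //.
Qed.

Lemma nbr_sum n (x : vert n) :
  \big[Rplus/R0]_(y : vert n) (if sedge x y then 1 else 0) <= 27.
Proof.
rewrite (sum_ind [pred y | sedge x y]).
have := nbr_card x; move/leP/le_INR => h.
have e : INR 27 = 27 by simpl; lra.
apply: Rle_trans h _; rewrite e; lra.
Qed.

Lemma nbr_sum' n (x : vert n) :
  \big[Rplus/R0]_(y : vert n) (if sedge y x then 1 else 0) <= 27.
Proof.
rewrite (eq_bigr (fun y => if sedge x y then 1 else 0)); first exact: nbr_sum.
move=> y _.
by rewrite sedge_sym.
Qed.

Local Close Scope R_scope.
Local Open Scope R_scope.

Definition Sx n (u : vert n) : R :=
  \big[Rplus/R0]_(w : vert n | w != u) Rinv ((INR (dist u w)) ^ 2).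

Lemma Sx_ge0 n (u : vert n) : 0 <= Sx u.
Proof. by apply: sumR_ge0 => w _; apply: inv_ge0; apply: pow2_ge_0. Qed.

Lemma Zu_ge0 n (u : vert n) : 0 <= Zu u.
Proof. exact: inv_ge0 (Sx_ge0 u). Qed.

Lemma pchoose_ge0 n (u v : vert n) : 0 <= pchoose u v.
Proof. apply: Rmult_le_pos; [exact: Zu_ge0 | apply: inv_ge0; apply: pow2_ge_0]. Qed.

Lemma pchoose_sum n (u : vert n) : \big[Rplus/R0]_v pchoose u v <= 1.
Proof.
rewrite /pchoose sumR_mull (bigD1 u) //= dist_self /= Rmult_0_l Rinv_0 Rplus_0_l.
rewrite /Zu -/(Sx u); case: (Req_dec (Sx u) 0) => [->|h].
  by rewrite Rinv_0; lra.
by rewrite Rinv_l //; lra.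
Qed.

Lemma pchoose_le1 n (u v : vert n) : pchoose u v <= 1.
Proof.
apply: Rle_trans (pchoose_sum u).
by apply: (@sumR_single _ xpredT (pchoose u)) => // *; apply: pchoose_ge0.
Qed.

Lemma pchoose_far n (u v : vert n) : (2 <= dist u v)%N -> pchoose u v <= Zu u / 4.
Proof.
move=> /leP /le_INR h; rewrite /pchoose /Rdiv; apply: Rmult_le_compat_l; first exact: Zu_ge0.
apply: Rinv_le_contravar; first lra.
have : INR 2 = 2 by simpl; lra.
move=> e; rewrite e in h; nra.
Qed.

Lemma weight_ge0 n (c : {ffun vert n -> vert n}) : 0 <= weight c.
Proof. by apply: prodR_ge0 => x _; apply: pchoose_ge0. Qed.

Definition agree n (g : vert n -> option (vert n)) (c : {ffun vert n -> vert n}) : bool :=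
  [forall x, if g x is Some t then c x == t else true].

Definition fac n (x : vert n) (o : option (vert n)) : R :=
  if o is Some t then pchoose x t else 1.

Lemma agree_bound n (g : vert n -> option (vert n)) :
  \big[Rplus/R0]_(c | agree g c) weight c <= \big[Rmult/R1]_x fac x (g x).
Proof.
pose F' := fun x y => if g x is Some t then (if y == t then pchoose x y else 0) else pchoose x y.
have E : \big[Rplus/R0]_(c | agree g c) weight c =
         \big[Rplus/R0]_(c : {ffun vert n -> vert n}) \big[Rmult/R1]_x F' x (c x).
  rewrite big_mkcond /=; apply: eq_bigr => c _; rewrite /weight.
  case: (boolP (agree g c)) => Ha.
    apply: eq_bigr => x _; rewrite /F'; move/forallP: Ha => /(_ x).
    by case: (g x) => //= t /eqP ->; rewrite eqxx.
  move/forallPn: Ha => [x Hx]; rewrite (bigD1 x) //=.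
  have -> : F' x (c x) = 0.
    by rewrite /F'; case: (g x) Hx => //= t Hx; rewrite (negbTE Hx).
  by rewrite Rmult_0_l.
rewrite E -bigA_distr_bigA; apply: (proj2 (@prodR_le (vert n) (index_enum _) xpredT _ _ _)) => x _.
have hF : forall y, 0 <= F' x y.
  by move=> y; rewrite /F'; case: (g x) => [t|]; [case: (y == t); [apply: pchoose_ge0|lra]|apply: pchoose_ge0].
split; first by apply: sumR_ge0.
rewrite /F' /fac; case: (g x) => [t|]; last exact: pchoose_sum.
rewrite (bigD1 t) //= eqxx big1 ?Rplus_0_r; first lra.
by move=> y /negbTE ->.
Qed.

Local Close Scope R_scope.
Local Open Scope R_scope.

Notation pat := (bool * bool * bool)%type.

Definition gtri n (u a b : vert n) (p : pat) : vert n -> option (vert n) :=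
  let '(t1, t2, t3) := p in fun x =>
  if x == u then (if t1 then Some a else None)
  else if x == a then (if t2 then Some b else None)
  else if x == b then (if t3 then Some u else None) else None.

Definition econd n (t : bool) (x y : vert n) : bool :=
  if t then (2 <= dist x y)%N else sedge x y.

Definition stat n (u a b : vert n) (p : pat) : bool :=
  let '(t1, t2, t3) := p in
  [&& a != u, b != u, a != b, [|| t1, t2 | t3],
      econd t1 u a, econd t2 a b & econd t3 b u].

Definition nz (p : pat) : bool := let '(t1, t2, t3) := p in [|| t1, t2 | t3].

Definition ef n (t : bool) (x y : vert n) : R :=
  if t then (if (2 <= dist x y)%N then pchoose x y else 0)
  else (if sedge x y then 1 else 0).

Lemma ef_ge0 n t (x y : vert n) : 0 <= ef t x y.
Proof. rewrite /ef; case: t; case: ifP => _; try lra; exact: pchoose_ge0. Qed.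

Lemma typed_econd n (c : {ffun vert n -> vert n}) x y :
  typed c x y -> econd (type_w c x y) x y.
Proof.
rewrite /typed /econd; case hw: (type_w c x y); last by rewrite orbF.
by move: hw; rewrite /type_w => /andP [].
Qed.

Lemma E_witness n (u : vert n) (c : {ffun vert n -> vert n}) :
  E_ev u c -> exists a b p, stat u a b p && agree (gtri u a b p) c.
Proof.
move=> /existsP [a /existsP [b /and5P [hau hbu hab h1 /and3P [h2 h3 hw]]]].
exists a, b, (type_w c u a, type_w c a b, type_w c b u).
apply/andP; split.
  rewrite /stat hau hbu hab hw /=.
  by rewrite (typed_econd h1) (typed_econd h2) (typed_econd h3).
apply/forallP => x /=.
case: (x =P u) => [->|_]; first by case hw1: (type_w _ _ _) => //=; move: hw1 => /andP [].
case: (x =P a) => [->|_]; first by case hw1: (type_w _ _ _) => //=; move: hw1 => /andP [].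
case: (x =P b) => [->|_]; first by case hw1: (type_w _ _ _) => //=; move: hw1 => /andP [].
done.
Qed.

Lemma prob_union n (u : vert n) :
  prob_E u <= \big[Rplus/R0]_(a : vert n) \big[Rplus/R0]_(b : vert n)
     \big[Rplus/R0]_(p : pat)
       (if stat u a b p then \big[Rmult/R1]_x fac x (gtri u a b p x) else 0).
Proof.
pose G := fun c a b p => if stat u a b p && agree (gtri u a b p) c then weight c else 0.
have hG : forall c a b p, 0 <= G c a b p.
  by move=> c a b p; rewrite /G; case: ifP => _; [apply: weight_ge0|lra].
apply: (@Rle_trans _ (\big[Rplus/R0]_(c : {ffun vert n -> vert n}) \big[Rplus/R0]_(a : vert n)
     \big[Rplus/R0]_(b : vert n) \big[Rplus/R0]_(p : pat) G c a b p)).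
  rewrite /prob_E big_mkcond; apply: sumR_le => c _.
  case: ifP => [/andP [_ hE]|_]; last by do 3! (apply: sumR_ge0 => ? _); apply: hG.
  have [a [b [p hs]]] := E_witness hE.
  have e : weight c = G c a b p by rewrite /G hs.
  rewrite e.
  apply: (@Rle_trans _ (\big[Rplus/R0]_p0 G c a b p0)).
    by apply: (@sumR_singleT _ (fun p0 => G c a b p0) p) => *; apply: hG.
  apply: (@Rle_trans _ (\big[Rplus/R0]_b0 \big[Rplus/R0]_p0 G c a b0 p0)).
    apply: (@sumR_singleT _ (fun b0 => \big[Rplus/R0]_p0 G c a b0 p0) b) => *.
    by apply: sumR_ge0 => *; apply: hG.
  apply: (@sumR_singleT _ (fun a0 => \big[Rplus/R0]_b0 \big[Rplus/R0]_p0 G c a0 b0 p0) a) => *.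
  by apply: sumR_ge0 => *; apply: sumR_ge0 => *; apply: hG.
rewrite exchange_big; apply: sumR_le => a _.
rewrite exchange_big; apply: sumR_le => b _.
rewrite exchange_big; apply: sumR_le => p _.
rewrite /G; case: (stat u a b p) => /=; last by rewrite big1 //; lra.
by rewrite -big_mkcond; apply: agree_bound.
Qed.

Lemma fac_ef n t (x y : vert n) :
  econd t x y -> fac x (if t then Some y else None) = ef t x y.
Proof. by rewrite /econd /ef; case: t => /= ->. Qed.

Lemma term_le n (u a b : vert n) (p : pat) :
  (if stat u a b p then \big[Rmult/R1]_x fac x (gtri u a b p x) else 0) <=
  (if nz p then ef p.1.1 u a * ef p.1.2 a b * ef p.2 b u else 0).
Proof.
have hr : 0 <= (if nz p then ef p.1.1 u a * ef p.1.2 a b * ef p.2 b u else 0).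
  case: (nz p); last lra.
  by apply: Rmult_le_pos; [apply: Rmult_le_pos|]; apply: ef_ge0.
case hs: (stat u a b p); last exact: hr.
case: p hs hr => [[t1 t2] t3] /and5P [hau hbu hab hnz /and3P [e1 e2 e3]] _.
rewrite /nz hnz /=.
rewrite (bigD1 u) //= (bigD1 a) /= ?hau // (bigD1 b) /= ?hbu ?(eq_sym b a) ?hab //.
rewrite big1; last first.
  move=> x /andP [/andP [hxu hxa] hxb].
  by rewrite (negbTE hxu) (negbTE hxa) (negbTE hxb).
rewrite eqxx (negbTE hau) eqxx (negbTE hbu) (negbTE hab) eqxx.
rewrite (fac_ef e1) (fac_ef e2) (fac_ef e3).
by apply: Req_le; ring.
Qed.

Lemma dbl1 (I J : finType) (A : I -> R) (B C : I -> J -> R) Q K1 K2 :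
  0 <= Q -> 0 <= K2 -> (forall a, 0 <= A a) -> (forall a b, 0 <= B a b) ->
  (forall a b, 0 <= C a b) -> (forall a b, C a b <= Q) ->
  \big[Rplus/R0]_a A a <= K1 -> (forall a, \big[Rplus/R0]_b B a b <= K2) ->
  \big[Rplus/R0]_a \big[Rplus/R0]_b (A a * B a b * C a b) <= Q * K2 * K1.
Proof.
move=> hQ hK2 hA hB hC hCQ hK1 hBK.
apply: (@Rle_trans _ (\big[Rplus/R0]_a ((Q * K2) * A a))).
  apply: sumR_le => a _.
  apply: (@Rle_trans _ (\big[Rplus/R0]_b ((A a * Q) * B a b))).
    apply: sumR_le => b _.
    replace (A a * Q * B a b) with (A a * B a b * Q) by ring.
    by apply: Rmult_le_compat_l; [apply: Rmult_le_pos|].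
  rewrite sumR_mull.
  replace (Q * K2 * A a) with ((A a * Q) * K2) by ring.
  apply: Rmult_le_compat_l => //; exact: Rmult_le_pos.
rewrite sumR_mull; apply: Rmult_le_compat_l => //; exact: Rmult_le_pos.
Qed.

Lemma efw n Zb (hZ : forall x : vert n, Zu x <= Zb) (x y : vert n) : ef true x y <= Zb / 4.
Proof.
rewrite /ef; case: ifP => h.
  by apply: Rle_trans (pchoose_far h) _; have := hZ x; lra.
have := hZ x; have := Zu_ge0 x; lra.
Qed.

Lemma ef_out n t (x : vert n) : \big[Rplus/R0]_y ef t x y <= 27.
Proof.
case: t; last exact: nbr_sum.
apply: (@Rle_trans _ (\big[Rplus/R0]_y pchoose x y)); last by have := pchoose_sum x; lra.
apply: sumR_le => y _; rewrite /ef; case: ifP => _; first lra.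
exact: pchoose_ge0.
Qed.

Lemma ef_in n (y : vert n) : \big[Rplus/R0]_x ef false x y <= 27.
Proof. exact: nbr_sum'. Qed.

Lemma pat_bound n (u : vert n) Zb (hZ : forall x : vert n, Zu x <= Zb) (p : pat) :
  \big[Rplus/R0]_(a : vert n) \big[Rplus/R0]_(b : vert n)
    (if nz p then ef p.1.1 u a * ef p.1.2 a b * ef p.2 b u else 0) <= 729 * (Zb / 4).
Proof.
have hQ : 0 <= Zb / 4 by have := hZ u; have := Zu_ge0 u; lra.
case: p => [[t1 t2] t3]; rewrite /nz /=.
case: t3.
  rewrite /= ?orbT /=.
  apply: Rle_trans (dbl1 (A := fun a => ef t1 u a) (B := fun a b => ef t2 a b)
      (C := fun a b => ef true b u) hQ _ _ _ _ _ (ef_out t1 u) (fun a => ef_out t2 a)) _;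
    try (by move=> *; apply: ef_ge0); try lra.
  by move=> *; apply: efw.
case: t2.
  rewrite /= ?orbT /=.
  rewrite (eq_bigr (fun a => \big[Rplus/R0]_b (ef t1 u a * ef false b u * ef true a b))); last first.
    by move=> a _; apply: eq_bigr => b _; rewrite /ef /=; ring.
  apply: Rle_trans (dbl1 (A := fun a => ef t1 u a) (B := fun a b => ef false b u)
      (C := fun a b => ef true a b) hQ _ _ _ _ _ (ef_out t1 u) (fun a => ef_in u)) _;
    try (by move=> *; apply: ef_ge0); try lra.
  by move=> *; apply: efw.
case: t1; last first.
  rewrite /= big1; first lra.
  by move=> a _; rewrite big1.
rewrite /=.
rewrite (eq_bigr (fun a => \big[Rplus/R0]_b (ef false b u * ef false a b * ef true u a))); last first.
  by move=> a _; apply: eq_bigr => b _; rewrite /ef /=; ring.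
rewrite exchange_big /=.
apply: Rle_trans (dbl1 (A := fun b => ef false b u) (B := fun b a => ef false a b)
    (C := fun b a => ef true u a) hQ _ _ _ _ _ (ef_in u) (fun b => ef_in b)) _;
  try (by move=> *; apply: ef_ge0); try lra.
by move=> *; apply: efw.
Qed.

Lemma prob_bound n (u : vert n) Zb (hZ : forall x : vert n, Zu x <= Zb) :
  prob_E u <= 8 * (729 * (Zb / 4)).
Proof.
apply: Rle_trans (prob_union u) _.
apply: (@Rle_trans _ (\big[Rplus/R0]_(a : vert n) \big[Rplus/R0]_(b : vert n)
     \big[Rplus/R0]_(p : pat)
       (if nz p then ef p.1.1 u a * ef p.1.2 a b * ef p.2 b u else 0))).
  by do 3! (apply: sumR_le => ? _); apply: term_le.
rewrite (eq_bigr (fun a => \big[Rplus/R0]_(p : pat) \big[Rplus/R0]_(b : vert n)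
       (if nz p then ef p.1.1 u a * ef p.1.2 a b * ef p.2 b u else 0))); last first.
  by move=> a _; rewrite exchange_big.
rewrite exchange_big /=.
apply: (@Rle_trans _ (\big[Rplus/R0]_(p : pat) (729 * (Zb / 4)))).
  by apply: sumR_le => p _; apply: pat_bound.
rewrite sumR_const !card_prod card_bool /=; lra.
Qed.

Local Close Scope R_scope.

Definition outc (n A i : nat) : nat := if (n <= A)%N then A + i else A - i.
Definition inc (n A k : nat) : nat := if (n <= A)%N then A - k else A + k.

Lemma outc_spec n A i : (A <= n.*2)%N -> (absdiff A n + i <= n)%N ->
  (outc n A i <= n.*2)%N /\ absdiff (outc n A i) n = (absdiff A n + i)%N.
Proof. rewrite /outc /absdiff -muln2; case: (leqP n A) => h; lia. Qed.

Lemma inc_spec n A k : (A <= n.*2)%N -> (k <= absdiff A n)%N ->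
  (inc n A k <= n.*2)%N /\ absdiff (inc n A k) n = (absdiff A n - k)%N.
Proof. rewrite /inc /absdiff -muln2; case: (leqP n A) => h; lia. Qed.

Lemma outc_step n A i : (A <= n.*2)%N -> (absdiff A n + i.+1 <= n)%N ->
  absdiff (outc n A i) (outc n A i.+1) = 1%N.
Proof. rewrite /outc /absdiff -muln2; case: (leqP n A) => h; lia. Qed.

Lemma inc_step n A k : (A <= n.*2)%N -> (k.+1 <= absdiff A n)%N ->
  absdiff (inc n A k) (inc n A k.+1) = 1%N.
Proof. rewrite /inc /absdiff -muln2; case: (leqP n A) => h; lia. Qed.

Lemma outc0 n A : outc n A 0 = A.
Proof. by rewrite /outc addn0 subn0; case: ifP. Qed.

Lemma inc0 n A : inc n A 0 = A.
Proof. by rewrite /inc addn0 subn0; case: ifP. Qed.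

Lemma absdiff0 a : absdiff a a = 0%N.
Proof. by rewrite /absdiff subnn. Qed.

Lemma absdiff_le1 a b : (absdiff a b <= 1)%N = (b <= a.+1)%N && (a <= b.+1)%N.
Proof. rewrite /absdiff; apply/idP/andP; lia. Qed.

Lemma inordK' n (k : nat) : (k <= n.*2)%N -> nat_of_ord (inord k : coord n) = k.
Proof. by move=> h; rewrite inordK. Qed.

Local Open Scope R_scope.

Local Close Scope R_scope.

Definition Pt n (A1 A2 A3 : coord n) (i j : nat) : pt n :=
  (inord (outc n A1 i), inord (outc n A2 j), inord (inc n A3 (i + j))).

Definition phi n (x : vert n) (A1 A2 A3 : coord n) (i j : nat) : vert n :=
  insubd x (Pt A1 A2 A3 i j).

Lemma sum_octa n (x : vert n) A1 A2 A3 : val x = (A1, A2, A3) ->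
  (absdiff A1 n + absdiff A2 n + absdiff A3 n = n)%N.
Proof. by move=> hv; have := valP x; rewrite hv /= => /eqP. Qed.

Lemma coord_le n (A : coord n) : (A <= n.*2)%N.
Proof. by rewrite -ltnS ltn_ord. Qed.

Section Constr.
Variables (n : nat) (x : vert n) (A1 A2 A3 : coord n).
Hypothesis hv : val x = (A1, A2, A3).

Lemma Pt_ads i j : (i + j <= absdiff A3 n)%N ->
  [/\ absdiff (outc n A1 i) n = (absdiff A1 n + i)%N,
      absdiff (outc n A2 j) n = (absdiff A2 n + j)%N &
      absdiff (inc n A3 (i + j)) n = (absdiff A3 n - (i + j))%N].
Proof.
move=> hij; have hs := sum_octa hv.
have [o1 e1] := @outc_spec n A1 i (coord_le _) ltac:(lia).
have [o2 e2] := @outc_spec n A2 j (coord_le _) ltac:(lia).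
have [o3 e3] := @inc_spec n A3 (i + j) (coord_le _) hij.
by [].
Qed.

Lemma Pt_bounds i j : (i + j <= absdiff A3 n)%N ->
  [/\ (outc n A1 i <= n.*2)%N, (outc n A2 j <= n.*2)%N & (inc n A3 (i + j) <= n.*2)%N].
Proof.
move=> hij; have hs := sum_octa hv.
have [o1 e1] := @outc_spec n A1 i (coord_le _) ltac:(lia).
have [o2 e2] := @outc_spec n A2 j (coord_le _) ltac:(lia).
have [o3 e3] := @inc_spec n A3 (i + j) (coord_le _) hij.
by [].
Qed.

Lemma Pt_vals0 i j : (i + j <= absdiff A3 n)%N ->
  [/\ nat_of_ord (Pt A1 A2 A3 i j).1.1 = outc n A1 i,
      nat_of_ord (Pt A1 A2 A3 i j).1.2 = outc n A2 j &
      nat_of_ord (Pt A1 A2 A3 i j).2 = inc n A3 (i + j)].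
Proof.
move=> hij; have hs := sum_octa hv.
have [o1 e1] := @outc_spec n A1 i (coord_le _) ltac:(lia).
have [o2 e2] := @outc_spec n A2 j (coord_le _) ltac:(lia).
have [o3 e3] := @inc_spec n A3 (i + j) (coord_le _) hij.
by rewrite /Pt /= !inordK'.
Qed.

Lemma Pt_ok i j : (i + j <= absdiff A3 n)%N -> on_octa (Pt A1 A2 A3 i j).
Proof.
move=> hij; have hs := sum_octa hv.
have [v1 v2 v3] := Pt_vals0 hij; have [e1 e2 e3] := Pt_ads hij.
rewrite /on_octa; case E: (Pt A1 A2 A3 i j) v1 v2 v3 => [[b1 b2] b3] /= -> -> ->.
apply/eqP; rewrite e1 e2 e3; lia.
Qed.

Lemma phi_val i j : (i + j <= absdiff A3 n)%N -> val (phi x A1 A2 A3 i j) = Pt A1 A2 A3 i j.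
Proof. by move=> hij; rewrite /phi insubdK //; apply: Pt_ok. Qed.

Lemma phi00 : phi x A1 A2 A3 0 0 = x.
Proof.
apply: val_inj; rewrite phi_val // hv /Pt outc0 inc0 /=.
by rewrite outc0 !inord_val.
Qed.

Lemma phi_stepi i j : (i.+1 + j <= absdiff A3 n)%N ->
  sedge (phi x A1 A2 A3 i j) (phi x A1 A2 A3 i.+1 j).
Proof.
move=> h; have hs := sum_octa hv.
have h' : (i + j <= absdiff A3 n)%N by lia.
have [v1 v2 v3] := Pt_vals0 h'; have [e1 e2 e3] := Pt_ads h'.
have [w1 w2 w3] := Pt_vals0 h; have [f1 f2 f3] := Pt_ads h.
have ne : phi x A1 A2 A3 i j != phi x A1 A2 A3 i.+1 j.
  apply/eqP => /(congr1 val); rewrite !phi_val //.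
  case E1: (Pt A1 A2 A3 i j) v1 e1 => [[b1 b2] b3] /= v1 e1.
  case E2: (Pt A1 A2 A3 i.+1 j) w1 f1 => [[c1 c2] c3] /= w1 f1 [] /(congr1 val) /=.
  rewrite v1 w1 => ee; move: e1 f1; rewrite ee; lia.
have [o1 o2 o3] := Pt_bounds h'; have [p1 p2 p3] := Pt_bounds h.
rewrite /sedge ne !phi_val // /Pt /= !inordK' //.
rewrite outc_step ?coord_le; last lia.
rewrite absdiff0 addSn inc_step ?coord_le //. all: try lia. all: try done.
Qed.

Lemma phi_stepj i j : (i + j.+1 <= absdiff A3 n)%N ->
  sedge (phi x A1 A2 A3 i j) (phi x A1 A2 A3 i j.+1).
Proof.
move=> h; have hs := sum_octa hv.
have h' : (i + j <= absdiff A3 n)%N by lia.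
have [v1 v2 v3] := Pt_vals0 h'; have [e1 e2 e3] := Pt_ads h'.
have [w1 w2 w3] := Pt_vals0 h; have [f1 f2 f3] := Pt_ads h.
have ne : phi x A1 A2 A3 i j != phi x A1 A2 A3 i j.+1.
  apply/eqP => /(congr1 val); rewrite !phi_val //.
  case E1: (Pt A1 A2 A3 i j) v2 e2 => [[b1 b2] b3] /= v2 e2.
  case E2: (Pt A1 A2 A3 i j.+1) w2 f2 => [[c1 c2] c3] /= w2 f2 [] _ /(congr1 val) /=.
  rewrite v2 w2 => ee; move: e2 f2; rewrite ee; lia.
have [o1 o2 o3] := Pt_bounds h'; have [p1 p2 p3] := Pt_bounds h.
rewrite /sedge ne !phi_val // /Pt /= !inordK' //.
rewrite outc_step ?coord_le; last lia.
rewrite absdiff0 addnS inc_step ?coord_le //. all: try lia. all: try done.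
Qed.

Lemma phi_reach i j : (i + j <= absdiff A3 n)%N -> reach x (phi x A1 A2 A3 i j) (i + j).
Proof.
elim: j => [|j IH] h.
  rewrite addn0 in h *.
  elim: i h => [|i IHi] h; first by rewrite phi00; apply: reach_refl.
  apply: reach_step (IHi ltac:(lia)) _.
  by apply: phi_stepi; rewrite addn0.
rewrite addnS; apply: reach_step (IH ltac:(lia)) _.
by apply: phi_stepj.
Qed.

Lemma phi_inj i j i' j' : (i + j <= absdiff A3 n)%N -> (i' + j' <= absdiff A3 n)%N ->
  phi x A1 A2 A3 i j = phi x A1 A2 A3 i' j' -> i = i' /\ j = j'.
Proof.
move=> h h' /(congr1 val); rewrite !phi_val // => E.
have [v1 v2 _] := Pt_vals0 h; have [e1 e2 _] := Pt_ads h.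
have [w1 w2 _] := Pt_vals0 h'; have [f1 f2 _] := Pt_ads h'.
move: v1 v2; rewrite E w1 w2 => v1 v2.
move: e1 e2; rewrite -v1 -v2 f1 f2; lia.
Qed.

Lemma phi_neq i j : (i + j.+1 <= absdiff A3 n)%N -> phi x A1 A2 A3 i j.+1 != x.
Proof.
move=> h; apply/eqP; rewrite -{2}phi00 => /phi_inj.
by case/(_ h) => //; lia.
Qed.

End Constr.

Local Close Scope R_scope.
Local Open Scope R_scope.

Lemma sub_sum (I : finType) (A : {pred I}) (P : pred I) (F : I -> R) :
  (forall i, i \in A -> P i) -> (forall i, P i -> 0 <= F i) ->
  \big[Rplus/R0]_(i in A) F i <= \big[Rplus/R0]_(i | P i) F i.
Proof.
move=> hAP hF; rewrite big_mkcond [X in _ <= X]big_mkcond.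
apply: sumR_le => i _; case: ifP => hA.
  by rewrite (hAP i hA); lra.
by case: ifP => hP; [apply: hF | lra].
Qed.

Lemma invsq_le (a b : nat) : (0 < a)%N -> (a <= b)%N -> / (INR b ^ 2) <= / (INR a ^ 2).
Proof.
move=> /leP ha /leP hab.
have ha' : 0 < INR a by apply: lt_0_INR.
have hb : INR a <= INR b by apply: le_INR.
apply: Rinv_le_contravar; first by apply: pow_lt.
by apply: pow_incr; lra.
Qed.

Lemma Sx_family n (x : vert n) (A1 A2 A3 : coord n) (hv : val x = (A1, A2, A3)) m :
  (m.*2 <= absdiff A3 n)%N ->
  \big[Rplus/R0]_(t : 'I_m.+1 * 'I_m) / (INR (t.1 + t.2 + 1) ^ 2) <= Sx x.
Proof.
move=> hm.
pose h := fun t : 'I_m.+1 * 'I_m => phi x A1 A2 A3 t.1 (t.2).+1.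
have hb : forall t : 'I_m.+1 * 'I_m, (t.1 + (t.2).+1 <= absdiff A3 n)%N.
  move=> [i j] /=; have := ltn_ord i; have := ltn_ord j; lia.
have hinj : {in predT &, injective h}.
  move=> [i j] [i' j'] _ _ /phi_inj /= => /(_ hv (hb (i, j)) (hb (i', j'))) [e1 e2].
  by congr pair; apply: val_inj => //; case: e2.
apply: (@Rle_trans _ (\big[Rplus/R0]_(w in [set h t | t in predT]) / (INR (dist x w) ^ 2))).
  rewrite big_imset //=.
  apply: sumR_le => t _.
  apply: invsq_le.
    by apply: dist_pos; apply: phi_neq.
  have -> : (t.1 + t.2 + 1 = t.1 + (t.2).+1)%N by lia.
  by apply: dist_le; apply: phi_reach.
apply: sub_sum.
  by move=> w /imsetP [t _ ->]; apply: phi_neq.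
by move=> w _; apply: inv_ge0; apply: pow2_ge_0.
Qed.

Local Close Scope R_scope.
Local Open Scope R_scope.

Lemma INR_pos (k : nat) : 0 < INR k.+1.
Proof. by apply: lt_0_INR; apply/leP. Qed.

Lemma big_ord_recrR (K : nat) (F : nat -> R) :
  \big[Rplus/R0]_(i < K.+1) F i = \big[Rplus/R0]_(i < K) F i + F K.
Proof. by rewrite big_ord_recr. Qed.

Lemma tele (K k : nat) :
  / INR (k + 1) - / INR (K + k + 1) <=
  \big[Rplus/R0]_(i < K) / (INR (i + k + 1) ^ 2).
Proof.
elim: K => [|K IH]; first by rewrite big_ord0 add0n; lra.
rewrite (big_ord_recrR K (fun i => / (INR (i + k + 1) ^ 2))).
have hy := INR_pos (K + k).
have e1 : INR (K + k + 1) = INR (K + k) + 1 by rewrite plus_INR /=.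
have e2 : INR (K.+1 + k + 1) = INR (K + k) + 1 + 1 by rewrite !plus_INR S_INR /=; ring.
rewrite e2; rewrite e1 in IH *.
set y := INR (K + k) + 1.
have hy1 : 0 < y by rewrite /y; move: hy; rewrite S_INR; lra.
have : / y - / (y + 1) <= / (y ^ 2).
  have -> : / y - / (y + 1) = / (y * (y + 1)) by field; lra.
  apply: Rinv_le_contravar; first by apply: pow_lt.
  by rewrite /= Rmult_1_r; apply: Rmult_le_compat_l; lra.
move=> hh; move: IH; rewrite -/y => IH; lra.
Qed.

Lemma ln_step (k : nat) : ln (INR k.+2) <= ln (INR k.+1) + / INR k.+1.
Proof.
have hk := INR_pos k.
have e : INR k.+2 = INR k.+1 * (1 + / INR k.+1).
  by rewrite (S_INR k.+1); field; lra.
have h1 : 0 < 1 + / INR k.+1 by have := Rinv_0_lt_compat _ hk; lra.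
rewrite e ln_mult; [|exact: hk|exact: h1].
suff : ln (1 + / INR k.+1) <= / INR k.+1 by lra.
have hv : / INR k.+1 <> 0 by apply: Rinv_neq_0_compat; lra.
have := exp_ineq1 _ hv => hlt.
rewrite -{2}(ln_exp (/ INR k.+1)); apply: Rlt_le; apply: ln_increasing => //.
Qed.

Lemma harm_ln (m : nat) : ln (INR m.+1) <= \big[Rplus/R0]_(j < m) / INR (j + 1).
Proof.
elim: m => [|m IH]; first by rewrite big_ord0 /= ln_1; lra.
rewrite (big_ord_recrR m (fun j => / INR (j + 1))) addn1.
by have := ln_step m; lra.
Qed.

Lemma family_lb m :
  ln (INR m.+1) - 1 <= \big[Rplus/R0]_(t : 'I_m.+1 * 'I_m) / (INR (t.1 + t.2 + 1) ^ 2).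
Proof.
have -> : \big[Rplus/R0]_(t : 'I_m.+1 * 'I_m) / (INR (t.1 + t.2 + 1) ^ 2) =
          \big[Rplus/R0]_(i < m.+1) \big[Rplus/R0]_(j < m) / (INR (i + j + 1) ^ 2).
  by rewrite pair_big.
rewrite exchange_big.
pose a := fun j : 'I_m => / INR (j + 1).
pose b := fun j : 'I_m => / INR (m.+1 + j + 1).
apply: (@Rle_trans _ (\big[Rplus/R0]_(j < m) (a j - b j))).
  have hb : \big[Rplus/R0]_(j < m) b j <= 1.
    apply: (@Rle_trans _ (\big[Rplus/R0]_(j < m) / INR m.+1)).
      apply: sumR_le => j _; rewrite /b.
      apply: Rinv_le_contravar; first exact: INR_pos.
      by apply: le_INR; apply/leP; lia.
    rewrite sumR_const card_ord.
    have hm := INR_pos m.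
    have -> : INR m * / INR m.+1 = 1 - / INR m.+1 by rewrite S_INR; field; rewrite -S_INR; lra.
    by have := Rinv_0_lt_compat _ hm; lra.
  have e : \big[Rplus/R0]_(j < m) a j =
           \big[Rplus/R0]_(j < m) (a j - b j) + \big[Rplus/R0]_(j < m) b j.
    by rewrite -big_split /=; apply: eq_bigr => j _; ring.
  have := harm_ln m; rewrite -/(\big[Rplus/R0]_(j < m) a j) e; lra.
apply: sumR_le => j _; rewrite /a /b.
have := tele m.+1 j; rewrite addnC.
by congr Rle; apply: eq_bigr => i _; rewrite (addnC j) .
Qed.

Local Close Scope R_scope.

Definition rotp n (p : pt n) : pt n := let '(a, b, c) := p in (b, c, a).

Lemma rot_ok n (v : vert n) : on_octa (rotp (val v)).
Proof.
have := valP v; rewrite /on_octa; case: (val v) => [[a b] c] /=.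
by move/eqP => h; apply/eqP; lia.
Qed.

Definition rotv n (v : vert n) : vert n := exist _ (rotp (val v)) (rot_ok v).

Lemma rotv3 n (v : vert n) : rotv (rotv (rotv v)) = v.
Proof. by apply: val_inj => /=; case: (val v) => [[a b] c]. Qed.

Lemma rotv_inj n : injective (@rotv n).
Proof. by move=> v w e; rewrite -(rotv3 v) -(rotv3 w) e. Qed.

Lemma sedge_rot n (v w : vert n) : sedge (rotv v) (rotv w) = sedge v w.
Proof.
rewrite /sedge (inj_eq (@rotv_inj n)) /=.
case: (val v) => [[a1 a2] a3]; case: (val w) => [[b1 b2] b3] /=.
by case: (v != w); case: (absdiff a1 b1 <= 1)%N; case: (absdiff a2 b2 <= 1)%N; case: (absdiff a3 b3 <= 1)%N.
Qed.

Lemma reach_rot n (v w : vert n) k : reach v w k -> reach (rotv v) (rotv w) k.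
Proof.
move=> /existsP [p /andP [hp /eqP hl]]; apply/existsP; exists (map_tuple (@rotv n) p).
rewrite /= path_map last_map hl eqxx andbT.
have e : relpre (@rotv n) (@sedge n) =2 @sedge n by move=> a b /=; rewrite sedge_rot.
by rewrite (eq_path e).
Qed.

Lemma reach_rotE n (v w : vert n) k : reach (rotv v) (rotv w) k = reach v w k.
Proof.
apply/idP/idP; last exact: reach_rot.
by move=> /reach_rot /reach_rot; rewrite !rotv3.
Qed.

Lemma dist_rot n (v w : vert n) : dist (rotv v) (rotv w) = dist v w.
Proof.
rewrite /dist; exact: (eq_find (fun k => reach_rotE v w k)).
Qed.

Local Open Scope R_scope.

Lemma Sx_rot n (x : vert n) : Sx (rotv x) = Sx x.
Proof.
rewrite /Sx.
rewrite [LHS](reindex_inj (@rotv_inj n)).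
rewrite [LHS](eq_bigr (fun j => / INR (dist x j) ^ 2)); last by move=> j _; rewrite dist_rot.
rewrite [LHS](eq_bigl (fun j => j != x)) //.
by move=> w /=; rewrite (inj_eq (@rotv_inj n)).
Qed.

Lemma Sx_lb3 n (x : vert n) (A1 A2 A3 : coord n) : val x = (A1, A2, A3) ->
  (n <= 3 * absdiff A3 n)%N ->
  exists m, (n <= 6 * m.+1)%N /\ ln (INR m.+1) - 1 <= Sx x.
Proof.
move=> hv hb; exists (absdiff A3 n %/ 2); split; first lia.
apply: Rle_trans (family_lb _) _.
apply: (Sx_family hv); lia.
Qed.

Lemma Sx_lb n (x : vert n) :
  exists m, (n <= 6 * m.+1)%N /\ ln (INR m.+1) - 1 <= Sx x.
Proof.
case E: (val x) => [[A1 A2] A3].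
have hs := sum_octa E.
case: (leqP n (3 * absdiff A3 n)) => h3; first exact: Sx_lb3 E h3.
case: (leqP n (3 * absdiff A1 n)) => h1.
  rewrite -Sx_rot; apply: (@Sx_lb3 _ _ A2 A3 A1) => //=.
  by rewrite E.
rewrite -Sx_rot -Sx_rot; apply: (@Sx_lb3 _ _ A3 A1 A2); last lia.
by rewrite /= E.
Qed.

Local Close Scope R_scope.
Local Open Scope R_scope.

Lemma ln_le' x y : 0 < x -> x <= y -> ln x <= ln y.
Proof.
move=> hx hxy; case: (Rle_lt_or_eq_dec _ _ hxy) => [h|->]; last lra.
by apply: Rlt_le; apply: ln_increasing.
Qed.

Lemma ln6 : ln 6 <= 3.
Proof.
have h1 : 2 < exp 1 by have := exp_ineq1 1 ltac:(lra); lra.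
have e3 : exp 3 = exp 1 * exp 1 * exp 1.
  by rewrite -!exp_plus; congr exp; lra.
have h8 : 6 < exp 3 by rewrite e3; nra.
rewrite -(ln_exp 3); apply: ln_le'; lra.
Qed.

Lemma ln_big n : (6561 <= n)%N -> 8 <= ln (INR n).
Proof.
move=> /leP /le_INR hn.
have e : INR 6561 = 3 ^ 8.
  rewrite INR_IZR_INZ; simpl Z.of_nat; ring.
have h3 : 1 <= ln 3.
  rewrite -(ln_exp 1); apply: ln_le'; first exact: exp_pos.
  exact: exp_le_3.
apply: (@Rle_trans _ (ln (3 ^ 8))).
  rewrite ln_pow; last lra.
  simpl INR; lra.
apply: ln_le'; first by apply: pow_lt; lra.
by rewrite -e.
Qed.

Lemma Sx_big n (x : vert n) : (6561 <= n)%N -> ln (INR n) / 2 <= Sx x.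
Proof.
move=> hn; have hL := ln_big hn.
have [m [hm hS]] := Sx_lb x.
have hm' : INR n <= 6 * INR m.+1.
  have := le_INR _ _ (leP hm); rewrite mult_INR.
  have -> : INR 6 = 6 by simpl; lra.
  done.
have h1n : (1 <= n)%N by apply: leq_trans hn.
have hpos : 0 < INR n by apply: lt_0_INR; lia.
have hmpos := INR_pos m.
have : ln (INR n) <= ln 6 + ln (INR m.+1).
  rewrite -ln_mult; [|lra|lra].
  by apply: ln_le'.
have := ln6; lra.
Qed.

Theorem theorem3 :
  exists C : R, exists N : nat,
    forall n : nat, (N <= n)%N ->
      forall u : vert n, Rle (prob_E u) (Rdiv C (ln (INR n))).
Proof.
exists 2916, 6561%N => n hn u.
have hL := ln_big hn.
have hZ : forall x : vert n, Zu x <= 2 * / ln (INR n).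
  move=> x; rewrite /Zu -/(Sx x).
  have hS := Sx_big x hn.
  have -> : 2 * / ln (INR n) = / (ln (INR n) / 2) by field; lra.
  by apply: Rinv_le_contravar; lra.
have := prob_bound u hZ.
rewrite /Rdiv; lra.
Qed.
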